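(* Let $\mathbf K$ be a commutative field, $p,q\in\mathbb N$, and let $\tau:\mathcal M_p\to\mathcal M_q$ be a transducer. Then its transducer-matrix $M_\tau\in\mathbf K^{\mathcal M_{q\times p}}$ is a recurrence matrix (i.e. lies in $\mathrm{Rec}_{q\times p}(\mathbf K)$) if and only if $\tau$ is a finite-state transducer.
   Context: $\mathcal M_X$ denotes the free monoid on an alphabet $X$ and $\mathcal M_p$ the free monoid on $\{0,\dots,p-1\}$. For $A:\mathcal M_X\to Y$ the transducer $\tau_A:\mathcal M_X\to\mathcal M_Y$ is the length-preserving map with $\tau_A(\emptyset)=\emptyset$ and $\tau_A(u_1\dots u_n)=A[u_1u_2\dots u_n]A[u_2\dots u_n]\cdots A[u_{n-1}u_n]A[u_n]$; a transducer $\mathcal M_p\to\mathcal M_q$ is a map of the form $\tau_A$ with $A:\mathcal M_p\to\{0,\dots,q-1\}$, and it is finite-state if $A$ can be chosen automatic. A function $A:\mathcal M_X\to Y$ is automatic if there are a finite set $\mathcal V$, $v_*\in\mathcal V$, $\delta:\mathcal V\times X\to\mathcal V$ and $w:\mathcal V\to Y$ (with $X$ finite) such that $A[x_1\dots x_n]=w(v)$, $v$ obtained from $v_*$ by applying $\delta(\cdot,x_1),\dots,\delta(\cdot,x_n)$ successively. $\mathcal M_{q\times p}$ is the set of pairs $(U,W)$ of words of common length with $U$ over $\{0,\dots,q-1\}$, $W$ over $\{0,\dots,p-1\}$; the transducer-matrix of $\tau$ is $M_\tau[U,W]=1$ if $\tau(W)=U$ and $0$ otherwise. For $M:\mathcal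 M_{q\times p}\to\mathbf K$, $(\rho(S,T)M)[U,W]=M[US,WT]$, and $\mathrm{Rec}_{q\times p}(\mathbf K)$ is the set of $M$ with finite-dimensional span of $\{\rho(S,T)M\}$. *)

(* Defs.v *)
From mathcomp Require Import all_boot all_algebra.
Set Implicit Arguments. Unset Strict Implicit. Unset Printing Implicit Defensive.
Import GRing.Theory.
Local Open Scope ring_scope.

(* Words of the free monoid M_p are sequences over 'I_p = {0,...,p-1}. *)

Fixpoint tauA (p q : nat) (A : seq 'I_p -> 'I_q) (u : seq 'I_p) : seq 'I_q :=
  match u with
  | [::] => [::]
  | x :: u' => A (x :: u') :: tauA A u'
  end.

Definition is_transducer (p q : nat) (tau : seq 'I_p -> seq 'I_q) : Prop :=
  exists A : seq 'I_p -> 'I_q, tau =1 tauA A.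

Definition automatic (p : nat) (Y : Type) (A : seq 'I_p -> Y) : Prop :=
  exists (V : finType) (vstar : V) (delta : V -> 'I_p -> V) (w : V -> Y),
    forall x : seq 'I_p, A x = w (foldl delta vstar x).

Definition finite_state_transducer (p q : nat) (tau : seq 'I_p -> seq 'I_q) : Prop :=
  exists A : seq 'I_p -> 'I_q, automatic A /\ tau =1 tauA A.

(* Matrices indexed by M_{q x p}: functions on pairs (U, W); only pairs with
   size U = size W are meaningful (values elsewhere are ignored below). *)
Definition transducer_matrix (K : fieldType) (p q : nat)
  (tau : seq 'I_p -> seq 'I_q) : seq 'I_q -> seq 'I_p -> K :=
  fun U W => if tau W == U then 1 else 0.

Definition rho (K : Type) (p q : nat) (S : seq 'I_q) (T : seq 'I_p)
  (M : seq 'I_q -> seq 'I_p -> K) : seq 'I_q -> seq 'I_p -> K :=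
  fun U W => M (U ++ S) (W ++ T).

(* M in Rec_{q x p}(K): the span of { rho(S,T) M : (S,T) in M_{q x p} },
   as functions on M_{q x p}, is finite dimensional, i.e. contained in the
   span of finitely many functions g_0, ..., g_{n-1} on M_{q x p}. *)
Definition Rec (K : fieldType) (p q : nat) (M : seq 'I_q -> seq 'I_p -> K) : Prop :=
  exists (n : nat) (g : 'I_n -> seq 'I_q -> seq 'I_p -> K),
    forall (S : seq 'I_q) (T : seq 'I_p), size S = size T ->
      exists c : 'I_n -> K,
        forall (U : seq 'I_q) (W : seq 'I_p), size U = size W ->
          rho S T M U W = \sum_(i < n) c i * g i U W.

(* Main.v *)
Require Import Defs.
From mathcomp Require Import all_boot all_algebra.
From Stdlib Require Import ClassicalEpsilon Classical.
Set Implicit Arguments. Unset Strict Implicit. Unset Printing Implicit Defensive.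
Import GRing.Theory.

Section Aux.
Variables (p q : nat).
Implicit Types (A : seq 'I_p -> 'I_q) (T W x : seq 'I_p).

Definition shiftA A T := fun x => A (x ++ T).
Definition EE A T T' := forall x, x != [::] -> A (x ++ T) = A (x ++ T').
Definition FK A := exists (Q : finType) (key : seq 'I_p -> Q),
  forall T T', key T = key T' -> EE A T T'.

Lemma tauA_cat A W T : tauA A (W ++ T) = tauA (shiftA A T) W ++ tauA A T.
Proof. by elim: W => [|a W IH] //=; rewrite IH. Qed.

Lemma size_tauA (r : nat) (B : seq 'I_p -> 'I_r) W : size (tauA B W) = size W.
Proof. by elim: W => [|a W IH] //=; rewrite IH. Qed.

Lemma tauA_E A T T' : EE A T T' -> forall W, tauA (shiftA A T) W = tauA (shiftA A T') W.
Proof.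
move=> H; elim=> [|a W IH] //=; rewrite IH /shiftA; congr (_ :: _); exact: H.
Qed.

Lemma rep_spec (Q : finType) (key : seq 'I_p -> Q) A :
  (forall T T', key T = key T' -> EE A T T') ->
  forall y, EE A (epsilon (inhabits [::]) (fun T => key T = key y)) y.
Proof.
move=> Hk y; apply: Hk.
by apply: (epsilon_spec (inhabits [::]) (fun T => key T = key y)); exists y.
Qed.

Lemma FK_auto A : FK A -> automatic A.
Proof.
case=> Q [key Hk].
pose rep k := epsilon (inhabits [::]) (fun T => key T = k).
have Hrep : forall y, EE A (rep (key y)) y by exact: rep_spec.
pose delta (v : option {ffun Q -> 'I_q}) (a : 'I_p) : option {ffun Q -> 'I_q} :=
  match v with
  | None => Some [ffun k => A (a :: rep k)]
  | Some f => Some [ffun k => f (key (a :: rep k))]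
  end.
pose w (v : option {ffun Q -> 'I_q}) :=
  match v with None => A [::] | Some f => f (key [::]) end.
have inv : forall (y x : seq 'I_p) (f : {ffun Q -> 'I_q}), x != [::] -> (forall k, f k = A (x ++ rep k)) ->
   exists g, foldl delta (Some f) y = Some g /\ forall k, g k = A (x ++ y ++ rep k).
  elim=> [|a y IH] x f hx hf; first by exists f.
  have [||g [hfo hg]] := IH (x ++ [:: a]) [ffun k => f (key (a :: rep k))].
  - by case: (x) hx.
  - move=> k; rewrite ffunE hf -catA /=; exact: Hrep.
  exists g; split; first exact: hfo.
  by move=> k; rewrite hg -catA.
exists (option {ffun Q -> 'I_q}), None, delta, w.
case=> [|b x] //=.
have [//||g [hfo hg]] := inv x [:: b] [ffun k => A (b :: rep k)].
  by move=> k; rewrite ffunE.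
have -> : foldl delta (delta None b) x = Some g by exact: hfo.
rewrite /= hg /=.
have := Hrep [::] (b :: x) isT; rewrite /= cats0 => ->; done.
Qed.

Lemma auto_FK A : automatic A -> FK A.
Proof.
case=> V [vs [d [w Hw]]].
exists {ffun V -> V}, (fun T => [ffun v => foldl d v T]) => T T' HT x _.
rewrite !Hw !foldl_cat.
have := congr1 (fun f : {ffun V -> V} => f (foldl d vs x)) HT; rewrite /= !ffunE => -> //.
Qed.

Lemma FK_Rec (K : fieldType) A (tau : seq 'I_p -> seq 'I_q) :
  FK A -> tau =1 tauA A -> Rec (transducer_matrix K tau).
Proof.
case=> Q [key Hk] Htau.
pose rep k := epsilon (inhabits [::]) (fun T => key T = k).
have Hrep : forall y, EE A (rep (key y)) y by exact: rep_spec.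
exists #|Q|, (fun (i : 'I_#|Q|) U W => if tauA (shiftA A (rep (enum_val i))) W == U then 1 else 0 : K)%R.
move=> S T hST.
exists (fun j => if j == enum_rank (key T) then (if tauA A T == S then 1 else 0) else 0 : K)%R.
move=> U W hUW.
rewrite (bigD1 (enum_rank (key T))) //= big1 ?addr0; last first.
  by move=> j /negbTE ->; rewrite mul0r.
rewrite eqxx enum_rankK /rho /transducer_matrix Htau tauA_cat.
rewrite (tauA_E (Hrep T)) eqseq_cat; last by rewrite size_tauA hUW.
by case: eqP; case: eqP; rewrite ?mulr1 ?mulr0 ?mul0r.
Qed.

End Aux.

Section L4.
Variables (K : fieldType) (p q : nat).
Local Open Scope ring_scope.

Lemma Rec_FK (A : seq 'I_p -> 'I_q) (tau : seq 'I_p -> seq 'I_q) :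
  Rec (transducer_matrix K tau) -> tau =1 tauA A -> FK A.
Proof.
move=> [n [g Hg]] Htau.
pose F T U W := (if tauA (shiftA A T) W == U then 1 else 0 : K).
have HF : forall T, exists c : 'I_n -> K, forall U W, size U = size W ->
    F T U W = \sum_i c i * g i U W.
  move=> T; have [c Hc] := Hg (tauA A T) T (size_tauA _ _).
  exists c => U W hUW; rewrite -Hc // /rho /transducer_matrix Htau tauA_cat.
  by rewrite eqseq_cat ?size_tauA // eqxx andbT.
pose pt0 := ([::] : seq 'I_q, [::] : seq 'I_p).
pose GP (P : seq (seq 'I_q * seq 'I_p)) : 'M[K]_(n, size P) :=
  \matrix_(i, j) g i (nth pt0 P j).1 (nth pt0 P j).2.
pose valid (x : seq 'I_q * seq 'I_p) := size x.1 = size x.2.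
have [P [hPv hP]] : exists P, (forall x, x \in P -> valid x) /\
    forall pt, valid pt -> (\rank (GP (rcons P pt)) <= \rank (GP P))%N.
  apply: NNPP => Hn.
  have step : forall k, exists P, (forall x, x \in P -> valid x) /\ (k <= \rank (GP P))%N.
    elim=> [|k [P [hv hk]]]; first by exists [::].
    have [pt hpt] : exists pt, ~ (valid pt -> (\rank (GP (rcons P pt)) <= \rank (GP P))%N).
      apply: not_all_ex_not => H; apply: Hn; exists P; split => //.
    have [hv' hr] := imply_to_and _ _ hpt.
    exists (rcons P pt); split.
      by move=> x; rewrite mem_rcons in_cons => /orP [/eqP -> | /hv].
    by apply: leq_ltn_trans hk _; rewrite ltnNge; apply/negP.
  have [P [_ hP]] := step n.+1.
  by have := leq_trans hP (rank_leq_row (GP P)); rewrite ltnn.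
have kerc : forall c : 'rV[K]_n, c *m GP P = 0 -> forall pt, valid pt ->
    \sum_i c 0 i * g i pt.1 pt.2 = 0.
  move=> c hc pt hpt.
  pose G' := GP (rcons P pt).
  have hle : (size P <= size (rcons P pt))%N by rewrite size_rcons.
  have sub : forall r (X : 'M[K]_(r, n)), X *m G' = 0 -> X *m GP P = 0.
    move=> r X hX; apply/matrixP => i j.
    have := congr1 (fun M : 'M_(r, _) => M i (widen_ord hle j)) hX.
    rewrite !mxE => h; rewrite ?mxE; apply: etrans h; apply: eq_bigr => k _.
    by rewrite !mxE /= nth_rcons ltn_ord.
  have s1 : (kermx G' <= kermx (GP P))%MS by apply/sub_kermxP; apply: sub; exact: mulmx_ker.
  have r1 : (\rank (kermx (GP P)) <= \rank (kermx G'))%N.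
    by rewrite !mxrank_ker leq_sub2l // hP.
  have s2 : (kermx (GP P) <= kermx G')%MS.
    rewrite -(mxrank_leqif_sup s1).2 eqn_leq r1 andbT; exact: (mxrank_leqif_sup s1).1.
  have hc' : c *m G' = 0.
    by apply/sub_kermxP; apply: submx_trans s2; apply/sub_kermxP.
  have hj : (size P < size (rcons P pt))%N by rewrite size_rcons.
  have := congr1 (fun M : 'M_(1, _) => M 0 (Ordinal hj)) hc'.
  rewrite !mxE => h; apply: etrans h; apply: eq_bigr => k _.
  by rewrite !mxE /= nth_rcons ltnn eqxx.
pose key T := [ffun j : 'I_(size P) =>
   tauA (shiftA A T) (nth pt0 P j).2 == (nth pt0 P j).1].
exists {ffun 'I_(size P) -> bool}, key => T T' hTT'.
suff hW : forall W, tauA (shiftA A T) W = tauA (shiftA A T') W.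
  by case=> [|a x] // _; have := hW (a :: x); case.
have hFF : forall U W, size U = size W -> F T U W = F T' U W.
  move=> U W hUW; have [c Hc] := HF T; have [c' Hc'] := HF T'.
  pose d : 'rV[K]_n := \row_i (c i - c' i).
  have hd : d *m GP P = 0.
    apply/matrixP => i j; rewrite !mxE.
    have hv : valid (nth pt0 P j) by apply: hPv; apply: mem_nth.
    have e : F T (nth pt0 P j).1 (nth pt0 P j).2 = F T' (nth pt0 P j).1 (nth pt0 P j).2.
      have := congr1 (fun f : {ffun _ -> bool} => f j) hTT'; rewrite /= !ffunE /F => -> //.
    have : F T (nth pt0 P j).1 (nth pt0 P j).2 - F T' (nth pt0 P j).1 (nth pt0 P j).2 = 0.
      by rewrite e subrr.
    rewrite Hc // Hc' // -sumrB => h; apply: etrans h; apply: eq_bigr => k _.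
    by rewrite !mxE mulrBl.
  have h := kerc d hd (U, W) hUW.
  rewrite Hc // Hc' //; apply/eqP; rewrite -subr_eq0 -sumrB; apply/eqP.
  apply: etrans h; apply: eq_bigr => k _.
  by rewrite !mxE mulrBl.
move=> W; have := hFF (tauA (shiftA A T) W) W (size_tauA _ _).
rewrite /F eqxx; case: eqP => [-> //|_] /eqP; by rewrite oner_eq0.
Qed.

End L4.

Theorem mainTheorem18 (K : fieldType) (p q : nat) (tau : seq 'I_p -> seq 'I_q) :
  is_transducer tau ->
  (Rec (transducer_matrix K tau) <-> finite_state_transducer tau).
Proof.
case=> A HA; split.
  move=> hR; exists A; split => //; apply: FK_auto; exact: Rec_FK hR HA.
case=> A' [hA' HA']; apply: (FK_Rec _ (auto_FK hA') HA').
Qed.
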